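(* Let $G$ be a graph with $n$ vertices. Then $n-\nabla(G)\le \gamma^{DLD}(G)$.
   Context: All graphs are finite, simple and undirected (not necessarily connected). For $u\in V$, $N(u)$ is the set of neighbours of $u$ and $N[u]=N(u)\cup\{u\}$. A code is a non-empty subset $C\subseteq V$; $I(C;u)=N[u]\cap C$. A code $C$ is solid-locating-dominating if $I(C;u)\ne\emptyset$ for every $u\in V\setminus C$ and $I(C;u)\not\subseteq I(C;v)$ for all distinct $u,v\in V\setminus C$; $\gamma^{DLD}(G)$ is the minimum size of such a code. The vicinal preorder $\lesssim$ on $V(G)$ is defined by $x\lesssim y$ iff $N(x)\subseteq N[y]$. A chain is a set $B\subseteq V(G)$ such that any two elements $x,y\in B$ satisfy $x\lesssim y$ or $y\lesssim x$. The Dilworth number $\nabla(G)$ is the minimum number of chains of the vicinal preorder needed to cover $V(G)$ (equivalently, the maximum size of an antichain, i.e. a set $A$ such that $x,y\in A$ and $x\lesssim y$ imply $x=y$). *)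

(* Defs.v *)
From mathcomp Require Import all_boot.
Set Implicit Arguments. Unset Strict Implicit. Unset Printing Implicit Defensive.

Definition simple_graph (T : finType) (e : rel T) : Prop :=
  symmetric e /\ irreflexive e.

Definition nbh (T : finType) (e : rel T) (u : T) : {set T} := [set v | e u v].
Definition cnbh (T : finType) (e : rel T) (u : T) : {set T} := u |: nbh e u.

Definition Icode (T : finType) (e : rel T) (C : {set T}) (u : T) : {set T} :=
  cnbh e u :&: C.

Definition solid_locating_dominating (T : finType) (e : rel T) (C : {set T}) : Prop :=
  C != set0 /\
  (forall u, u \notin C -> Icode e C u != set0) /\
  (forall u v, u \notin C -> v \notin C -> u != v -> ~~ (Icode e C u \subset Icode e C v)).

Definition is_gammaDLD (T : finType) (e : rel T) (k : nat) : Prop :=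
  (exists C : {set T}, solid_locating_dominating e C /\ #|C| = k) /\
  (forall C : {set T}, solid_locating_dominating e C -> k <= #|C|).

Definition vicinal (T : finType) (e : rel T) (x y : T) : bool :=
  nbh e x \subset cnbh e y.

Definition is_chain (T : finType) (e : rel T) (B : {set T}) : bool :=
  [forall x in B, forall y in B, vicinal e x y || vicinal e y x].

Definition chain_cover (T : finType) (e : rel T) (P : {set {set T}}) : bool :=
  [forall B in P, is_chain e B] && (\bigcup_(B in P) B == [set: T]).

Definition is_dilworth (T : finType) (e : rel T) (d : nat) : Prop :=
  (exists P : {set {set T}}, chain_cover e P /\ #|P| = d) /\
  (forall P : {set {set T}}, chain_cover e P -> d <= #|P|).

(* Main.v *)
Require Import Defs.
From mathcomp Require Import all_boot.

Lemma vic_sub (T : finType) (e : rel T) (C : {set T}) (u v : T) :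
  u \notin C -> vicinal e u v -> Icode e C u \subset Icode e C v.
Proof.
move=> uC /subsetP H; apply/subsetP => x.
rewrite /Icode /cnbh !inE => /andP [/orP [/eqP xu | eux] xC].
  by rewrite -xu xC in uC.
have := H x; rewrite /nbh /cnbh !inE => -> //; by rewrite xC.
Qed.

Theorem mainTheorem6 (T : finType) (e : rel T) (d g : nat) :
  simple_graph e -> is_dilworth e d -> is_gammaDLD e g ->
  #|T| - d <= g.
Proof.
move=> _ [[P [/andP [/forallP Pch /eqP Pcov] Pd]] _] [[C [[_ [_ Hsep]] <-]] _].
have Hin : forall a : T, exists2 B, B \in P & a \in B.
  move=> a; have : a \in \bigcup_(B in P) B by rewrite Pcov inE.
  by case/bigcupP => B BP aB; exists B.
pose f (a : T) := odflt set0 [pick B in P | a \in B].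
have fP : forall a, f a \in P /\ a \in f a.
  move=> a; rewrite /f; case: pickP => [B /andP [h1 h2] | H] //=.
  by have [B BP aB] := Hin a; have := H B; rewrite BP aB.
have finj : {in ~: C &, injective f}.
  move=> a b; rewrite !inE => aC bC fab; apply/eqP; apply: contraT => ab.
  have [fa aB] := fP a; have [_ bB] := fP b; rewrite -fab in bB.
  have := implyP (Pch (f a)) fa; rewrite /is_chain; move=> /forallP /(_ a) /implyP /(_ aB) /forallP /(_ b) /implyP /(_ bB).
  case/orP => V.
    by have := Hsep a b aC bC ab; rewrite vic_sub.
  by have := Hsep b a bC aC; rewrite eq_sym ab vic_sub //; move=> /(_ isT).
have cardA : #|~: C| <= d.
  rewrite -Pd -(card_in_imset finj); apply: subset_leq_card.
  by apply/subsetP => B /imsetP [a _ ->]; case: (fP a).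
rewrite leq_subLR -(cardsC C); rewrite addnC leq_add2r //.
Qed.
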